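(* Let $\alpha,g_0,\lambda,\kappa_0,\omega>0$, let $k>l\ge0$ be integers and put $n=k-l$. For $\Delta\tau>0$ and real $b\neq b'$ define $$I_{kl}(b,b')=\frac{1}{\kappa_0\pi}\int_{-\infty}^{\infty}e^{-i\alpha g_0\Delta\tau\,\omega n\, q}\,\frac{\sin[\kappa_0(q-\frac{2\lambda b}{\alpha g_0\Delta\tau})]}{q-\frac{2\lambda b}{\alpha g_0\Delta\tau}}\,\frac{\sin[\kappa_0(q-\frac{2\lambda b'}{\alpha g_0\Delta\tau})]}{q-\frac{2\lambda b'}{\alpha g_0\Delta\tau}}\,dq.$$ Then $$I_{kl}(b,b')=\frac{i\alpha g_0\Delta\tau}{4\lambda\kappa_0}\,V_{kl}(b,b')\,\Theta(2\kappa_0-\omega\alpha g_0 n\Delta\tau),$$ $$V_{kl}(b,b')=\frac{e^{-2i\lambda\left[\frac{\kappa_0}{\alpha g_0\Delta\tau}(b-b')+\omega n b'\right]}-e^{2i\lambda\left[\frac{\kappa_0}{\alpha g_0\Delta\tau}(b-b')-\omega n b\right]}}{b-b'},$$ with $\Theta$ the Heaviside step function, and $V_{kl}=0$ at $\Delta\tau=2\kappa_0/(\alpha g_0\omega n)$. Consequently all decoherence factors with $k\neq l$ vanish for $\Delta\tau\ge\frac{2\kappa_0}{\alpha g_0\omega}$.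
   Context: This is the decoherence factor for measuring the energy of a quantum harmonic oscillator (eigenvalues $(k+\tfrac12)\hbar\omega$) with probe initial state $\frac{1}{\sqrt{\kappa_0\pi}}\frac{\sin(\kappa_0 q)}{q}$; the factors with $k<l$ are the complex conjugates $I_{lk}=\overline{I_{kl}}$. *)

(* Defs.v *)
(* classical reals. Complex numbers are represented by their
   real and imaginary parts (Stdlib has no complex numbers). *)
From Stdlib Require Import Reals.
Open Scope R_scope.

Definition Ksinc (k x : R) : R :=
  if Req_EM_T x 0 then k else sin (k * x) / x.

Definition improper_integral (f : R -> R) (L : R) : Prop :=
  (forall a b : R, inhabited (Riemann_integrable f a b)) /\
  (forall eps : R, 0 < eps -> exists M : R, forall a b : R,
      a <= - M -> M <= b ->
      forall pr : Riemann_integrable f a b, Rabs (RiemannInt pr - L) < eps).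

(* Heaviside step function (the value at 0 is irrelevant here, since V vanishes there). *)
Definition Heaviside (x : R) : R := if Rle_dec 0 x then 1 else 0.

Definition ctr (alpha g0 lam dtau b : R) : R := 2 * lam * b / (alpha * g0 * dtau).

(* Real and imaginary parts of the integrand of I_kl(b,b') (including the
   prefactor 1/(kappa0 pi)); n = k - l. Note e^{-i t} = cos t - i sin t. *)
Definition integrand_re (alpha g0 lam kappa0 omega n dtau b b' q : R) : R :=
  / (kappa0 * PI) * cos (alpha * g0 * dtau * omega * n * q)
  * Ksinc kappa0 (q - ctr alpha g0 lam dtau b)
  * Ksinc kappa0 (q - ctr alpha g0 lam dtau b').

Definition integrand_im (alpha g0 lam kappa0 omega n dtau b b' q : R) : R :=
  - (/ (kappa0 * PI) * sin (alpha * g0 * dtau * omega * n * q)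
  * Ksinc kappa0 (q - ctr alpha g0 lam dtau b)
  * Ksinc kappa0 (q - ctr alpha g0 lam dtau b')).

(* phases: V = (e^{-i A} - e^{i B}) / (b - b') *)
Definition phaseA (alpha g0 lam kappa0 omega n dtau b b' : R) : R :=
  2 * lam * (kappa0 / (alpha * g0 * dtau) * (b - b') + omega * n * b').
Definition phaseB (alpha g0 lam kappa0 omega n dtau b b' : R) : R :=
  2 * lam * (kappa0 / (alpha * g0 * dtau) * (b - b') - omega * n * b).

Definition V_re (alpha g0 lam kappa0 omega n dtau b b' : R) : R :=
  (cos (phaseA alpha g0 lam kappa0 omega n dtau b b')
   - cos (phaseB alpha g0 lam kappa0 omega n dtau b b')) / (b - b').
Definition V_im (alpha g0 lam kappa0 omega n dtau b b' : R) : R :=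
  (- sin (phaseA alpha g0 lam kappa0 omega n dtau b b')
   - sin (phaseB alpha g0 lam kappa0 omega n dtau b b')) / (b - b').

(* RHS = (i c) * (V_re + i V_im) * Theta, with c = alpha g0 dtau / (4 lambda kappa0) *)
Definition rhs_re (alpha g0 lam kappa0 omega n dtau b b' : R) : R :=
  - (alpha * g0 * dtau / (4 * lam * kappa0)) * V_im alpha g0 lam kappa0 omega n dtau b b'
  * Heaviside (2 * kappa0 - omega * alpha * g0 * n * dtau).
Definition rhs_im (alpha g0 lam kappa0 omega n dtau b b' : R) : R :=
  (alpha * g0 * dtau / (4 * lam * kappa0)) * V_re alpha g0 lam kappa0 omega n dtau b b'
  * Heaviside (2 * kappa0 - omega * alpha * g0 * n * dtau).

(* Main.v *)
Require Import Defs.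
From Coquelicot Require Import Coquelicot.
From Stdlib Require Import Reals Lra Lia.
Open Scope R_scope.


Lemma sa1 y : sin_approx y 1 = y - y^3/6.
Proof. unfold sin_approx, sin_term. simpl sum_f_R0. simpl. field. Qed.
Lemma sa2 y : sin_approx y 2 = y - y^3/6 + y^5/120.
Proof. unfold sin_approx, sin_term. simpl sum_f_R0. simpl. field. Qed.
Lemma ca2 y : cos_approx y 2 = 1 - y^2/2 + y^4/24.
Proof. unfold cos_approx, cos_term. simpl sum_f_R0. simpl. field. Qed.

Lemma abs_sin_le_pos y : 0 <= y -> Rabs (sin y) <= y.
Proof.
  intros Hy. destruct (Rle_dec 1 y) as [H1|H1].
  - pose proof (SIN_bound y). apply Rabs_le. lra.
  - assert (H4 : y <= 4) by lra.
    pose proof (pre_sin_bound y 0 Hy H4) as [Hl Hu].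
    replace (2*0+1)%nat with 1%nat in Hl by reflexivity.
    replace (2*(0+1))%nat with 2%nat in Hu by reflexivity.
    rewrite sa1 in Hl. rewrite sa2 in Hu.
    assert (0 <= y^3) by (apply pow_le; lra).
    assert (y^5 <= y^3) by (replace (y^5) with (y^3*(y*y)) by ring; assert (y*y <= 1) by nra; nra).
    assert (y^3 <= y) by (replace (y^3) with (y*(y*y)) by ring; assert (y*y <= 1) by nra; nra).
    apply Rabs_le. split; lra.
Qed.

Lemma abs_sin_le y : Rabs (sin y) <= Rabs y.
Proof.
  destruct (Rle_lt_dec 0 y) as [Hy|Hy].
  - rewrite (Rabs_pos_eq y) by lra. now apply abs_sin_le_pos.
  - assert (H0 : 0 <= -y) by lra.
    assert (H := abs_sin_le_pos (-y) H0). rewrite sin_neg, Rabs_Ropp in H.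
    rewrite (Rabs_left y) by lra. exact H.
Qed.

Lemma Ksinc_nz k x : x <> 0 -> Ksinc k x = sin (k*x) / x.
Proof. intros H. unfold Ksinc. destruct (Req_EM_T x 0); [contradiction|reflexivity]. Qed.
Lemma Ksinc_0 k : Ksinc k 0 = k.
Proof. unfold Ksinc. destruct (Req_EM_T 0 0); [reflexivity|contradiction]. Qed.

Lemma Ksinc_bound k x : Rabs (Ksinc k x) <= Rabs k.
Proof.
  destruct (Req_EM_T x 0) as [->|Hx].
  - rewrite Ksinc_0. lra.
  - rewrite Ksinc_nz by auto. unfold Rdiv. rewrite Rabs_mult, Rabs_inv.
    apply (Rmult_le_reg_r (Rabs x)). apply Rabs_pos_lt; auto.
    rewrite Rmult_assoc, Rinv_l by (apply Rabs_no_R0; auto).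
    rewrite Rmult_1_r, <- Rabs_mult. apply abs_sin_le.
Qed.

Lemma Ksinc_bound2 k x : x <> 0 -> Rabs (Ksinc k x) <= / Rabs x.
Proof.
  intros Hx. rewrite Ksinc_nz by auto. unfold Rdiv. rewrite Rabs_mult, Rabs_inv.
  pose proof (SIN_bound (k*x)). assert (Rabs (sin (k*x)) <= 1) by (apply Rabs_le; lra).
  assert (0 < / Rabs x) by (apply Rinv_0_lt_compat, Rabs_pos_lt; auto).
  nra.
Qed.

Lemma Ksinc_opp k x : Ksinc (-k) x = - Ksinc k x.
Proof.
  destruct (Req_EM_T x 0) as [->|Hx].
  - rewrite !Ksinc_0. ring.
  - rewrite !Ksinc_nz by auto. replace (-k*x) with (-(k*x)) by ring. rewrite sin_neg. field; auto.
Qed.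

Lemma Ksinc_zero x : Ksinc 0 x = 0.
Proof.
  destruct (Req_EM_T x 0) as [->|Hx].
  - now rewrite Ksinc_0.
  - rewrite Ksinc_nz by auto. rewrite Rmult_0_l, sin_0. field; auto.
Qed.

Lemma Ksinc_even k x : Ksinc k (-x) = Ksinc k x.
Proof.
  destruct (Req_EM_T x 0) as [->|Hx].
  - now rewrite Ropp_0.
  - rewrite !Ksinc_nz by lra. replace (k * -x) with (-(k*x)) by ring. rewrite sin_neg. field; auto.
Qed.

Lemma Ksinc_cont k x : continuous (Ksinc k) x.
Proof.
  destruct (Req_EM_T x 0) as [->|Hx].
  - apply continuity_pt_filterlim. apply continuity_pt_locally. intros eps.
    assert (Hd : derivable_pt_lim (fun y => sin (k*y)) 0 k).
    { apply is_derive_Reals. auto_derive; auto. rewrite Rmult_0_r, cos_0. ring. }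
    destruct (Hd eps (cond_pos eps)) as [del Hdel].
    exists del. intros y Hy. change (Rabs (y - 0) < del) in Hy.
    rewrite Ksinc_0. destruct (Req_EM_T y 0) as [->|Hy0].
    + rewrite Ksinc_0. rewrite Rminus_diag, Rabs_R0. apply cond_pos.
    + rewrite Ksinc_nz by auto. specialize (Hdel y Hy0). rewrite Rminus_0_r in Hy.
      specialize (Hdel Hy). rewrite Rplus_0_l, Rmult_0_r, sin_0, Rminus_0_r in Hdel. exact Hdel.
  - apply continuous_ext_loc with (fun y => sin (k*y) / y).
    + destruct (Rlt_dec 0 x) as [Hp|Hn].
      * apply locally_interval with (Finite 0) p_infty; simpl; auto.
        intros y Hy _. rewrite Ksinc_nz; auto. lra.
      * apply locally_interval with m_infty (Finite 0); simpl; auto. lra.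
        intros y _ Hy. rewrite Ksinc_nz; auto. lra.
    + apply (ex_derive_continuous (K:=R_AbsRing) (V:=R_NormedModule) (fun y => sin (k*y) / y)). auto_derive. auto.
Qed.


Ltac nz := repeat match goal with
  | |- _ /\ _ => split
  | |- True => exact I
  | |- _ <> 0 => apply Rgt_not_eq; nra
  | |- _ <> 0 => apply Rlt_not_eq; nra
  end.

Definition RI (f : R -> R) (a b : R) : R := RInt f a b.

Lemma exc_on (f : R -> R) a b : (forall x, Rmin a b <= x <= Rmax a b -> continuous f x) -> ex_RInt f a b.
Proof. intros H. apply (@ex_RInt_continuous R_CompleteNormedModule f a b). intros; apply H; auto. Qed.

Lemma exc (f : R -> R) a b : (forall x, continuous f x) -> ex_RInt f a b.
Proof. intros H. apply exc_on. intros; apply H. Qed.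

Lemma RI_add (f g : R -> R) a b : ex_RInt f a b -> ex_RInt g a b ->
  RI (fun x => f x + g x) a b = RI f a b + RI g a b.
Proof. intros. apply (RInt_plus f g a b); auto. Qed.

Lemma RI_scal (f : R -> R) c a b : ex_RInt f a b ->
  RI (fun x => c * f x) a b = c * RI f a b.
Proof. intros. apply (RInt_scal f a b c); auto. Qed.

Lemma RI_sub (f g : R -> R) a b : ex_RInt f a b -> ex_RInt g a b ->
  RI (fun x => f x - g x) a b = RI f a b - RI g a b.
Proof. intros. apply (RInt_minus f g a b); auto. Qed.

Lemma RI_chasles (f : R -> R) a b c : ex_RInt f a b -> ex_RInt f b c ->
  RI f a b + RI f b c = RI f a c.
Proof. intros. apply (RInt_Chasles f a b c); auto. Qed.

Lemma RI_swap (f : R -> R) a b : ex_RInt f a b -> RI f b a = - RI f a b.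
Proof. intros. symmetry. apply (opp_RInt_swap f a b); auto. Qed.

Lemma RI_ext (f g : R -> R) a b : (forall x, f x = g x) -> RI f a b = RI g a b.
Proof. intros. apply RInt_ext. intros; auto. Qed.

Lemma RI_ext_on (f g : R -> R) a b : (forall x, Rmin a b < x < Rmax a b -> f x = g x) -> RI f a b = RI g a b.
Proof. intros. apply RInt_ext. intros; auto. Qed.

Lemma RI_point (f : R -> R) a : RI f a a = 0.
Proof. unfold RI. rewrite RInt_point. reflexivity. Qed.

Lemma RI_is (f : R -> R) a b v : is_RInt f a b v -> RI f a b = v.
Proof. intros H. apply (is_RInt_unique f a b v H). Qed.

Lemma cont_opp x : continuous (fun u : R => - u) x.
Proof. apply (ex_derive_continuous (K:=R_AbsRing) (V:=R_NormedModule) (fun u => -u)); auto_derive; auto. Qed.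

Lemma RI_sym (f : R -> R) B : (forall x, continuous f x) ->
  RI f (-B) B = RI (fun u => f u + f (-u)) 0 B.
Proof.
  intros Hc.
  assert (Hc' : forall x, continuous (fun u => f (-u)) x).
  { intros x. apply (continuous_comp (fun u : R => -u) f x). apply cont_opp. apply Hc. }
  rewrite RI_add by (apply exc; auto).
  rewrite <- (RI_chasles f (-B) 0 B) by (apply exc; auto).
  assert (H := RInt_comp_lin f (-1) 0 0 B (exc f _ _ Hc)).
  replace (-1 * 0 + 0) with 0 in H by ring.
  replace (-1 * B + 0) with (-B) in H by ring.
  change (RInt f 0 (-B)) with (RI f 0 (-B)) in H.
  rewrite (RI_swap f (-B) 0) in H by (apply exc; auto).
  assert (- RI f (-B) 0 = - RI (fun u => f (-u)) 0 B).
  { rewrite <- H. transitivity (RI (fun u => -1 * f (-u)) 0 B).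
    - apply RI_ext. intros x. unfold scal; simpl; unfold mult; simpl. replace (-1*x+0) with (-x) by ring. reflexivity.
    - rewrite RI_scal by (apply exc; auto). ring. }
  lra.
Qed.

Lemma RI_shift (f : R -> R) c a b : (forall x, continuous f x) ->
  RI (fun u => f (u + c)) a b = RI f (a + c) (b + c).
Proof.
  intros Hc. assert (H := RInt_comp_lin f 1 c a b (exc f _ _ Hc)).
  replace (1*a+c) with (a+c) in H by ring. replace (1*b+c) with (b+c) in H by ring.
  unfold RI. rewrite <- H. apply RInt_ext. intros x _. unfold scal; simpl; unfold mult; simpl. rewrite Rmult_1_l.
  f_equal. ring.
Qed.

Lemma Ksinc_scale nu B : 0 < nu -> RI (Ksinc nu) 0 B = RI (Ksinc 1) 0 (nu * B).
Proof.
  intros Hn. assert (H := RInt_comp_lin (Ksinc 1) nu 0 0 B (exc _ _ _ (Ksinc_cont 1))).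
  replace (nu*0+0) with 0 in H by ring. replace (nu*B+0) with (nu*B) in H by ring.
  unfold RI. rewrite <- H. apply RInt_ext. intros x _. unfold scal; simpl; unfold mult; simpl.
  destruct (Req_EM_T x 0) as [->|Hx].
  - rewrite Rmult_0_r, Rplus_0_r, !Ksinc_0. ring.
  - rewrite Rplus_0_r, !Ksinc_nz by (auto; apply Rmult_integral_contrapositive; split; lra).
    rewrite Rmult_1_l. field. lra.
Qed.

Lemma RI_abs_le (f g : R -> R) a b : a <= b -> ex_RInt f a b -> ex_RInt g a b ->
  (forall x, a < x < b -> Rabs (f x) <= g x) -> Rabs (RI f a b) <= RI g a b.
Proof.
  intros Hab Hf Hg H. apply Rle_trans with (RInt (fun t => Rabs (f t)) a b).
  apply abs_RInt_le; auto. apply RInt_le; auto.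
  apply ex_RInt_norm; auto.
Qed.

Lemma RI_abs_const (f : R -> R) a b M : a <= b -> ex_RInt f a b ->
  (forall x, a <= x <= b -> Rabs (f x) <= M) -> Rabs (RI f a b) <= (b - a) * M.
Proof. intros. apply abs_RInt_le_const; auto. Qed.

Lemma Si_cauchy A B : 0 < A <= B -> Rabs (RI (Ksinc 1) A B) <= 2 / A.
Proof.
  intros [HA HAB].
  assert (E : RI (Ksinc 1) A B = RI (fun t => sin t / t) A B).
  { apply RI_ext_on. intros x Hx. rewrite Rmin_left in Hx by lra. rewrite Rmax_right in Hx by lra.
    rewrite Ksinc_nz by lra. now rewrite Rmult_1_l. }
  assert (cf : forall x, A <= x <= B -> continuous (fun t => cos t / (t*t)) x).
  { intros x Hx. apply (ex_derive_continuous (K:=R_AbsRing) (V:=R_NormedModule) (fun t => cos t / (t*t))).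
    auto_derive. nz. }
  assert (D : is_RInt (fun t => sin t / t + cos t / (t*t)) A B ((- cos B / B) - (- cos A / A))).
  { apply (is_RInt_derive (fun t => - cos t / t)).
    - intros x Hx. rewrite Rmin_left in Hx by lra. rewrite Rmax_right in Hx by lra.
      auto_derive. nz. field. lra.
    - intros x Hx. rewrite Rmin_left in Hx by lra. rewrite Rmax_right in Hx by lra.
      apply (ex_derive_continuous (K:=R_AbsRing) (V:=R_NormedModule) (fun t => sin t / t + cos t / (t*t))).
      auto_derive. nz. }
  assert (D2 : is_RInt (fun t => 1 / (t*t)) A B ((- 1 / B) - (- 1 / A))).
  { apply (is_RInt_derive (fun t => - 1 / t)).
    - intros x Hx. rewrite Rmin_left in Hx by lra. rewrite Rmax_right in Hx by lra.
      auto_derive. nz. field. lra.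
    - intros x Hx. rewrite Rmin_left in Hx by lra. rewrite Rmax_right in Hx by lra.
      apply (ex_derive_continuous (K:=R_AbsRing) (V:=R_NormedModule) (fun t => 1 / (t*t))).
      auto_derive. nz. }
  assert (exc2 : ex_RInt (fun t => cos t / (t*t)) A B).
  { apply exc_on. intros z Hz. rewrite Rmin_left in Hz by lra. rewrite Rmax_right in Hz by lra. auto. }
  assert (exs : ex_RInt (fun t => sin t / t) A B).
  { apply ex_RInt_ext with (Ksinc 1). intros x Hx. rewrite Rmin_left in Hx by lra. rewrite Rmax_right in Hx by lra.
    rewrite Ksinc_nz by lra. now rewrite Rmult_1_l. apply exc, Ksinc_cont. }
  assert (E2 : RI (fun t => sin t / t) A B = ((- cos B / B) - (- cos A / A)) - RI (fun t => cos t / (t*t)) A B).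
  { rewrite <- (RI_is _ _ _ _ D). rewrite RI_add; auto. ring. }
  assert (Hb : Rabs (RI (fun t => cos t / (t*t)) A B) <= (- 1 / B) - (- 1 / A)).
  { rewrite <- (RI_is _ _ _ _ D2). apply RI_abs_le; auto. eexists; eauto.
    intros x Hx. unfold Rdiv. rewrite Rabs_mult, Rabs_inv.
    rewrite (Rabs_pos_eq (x*x)) by nra.
    assert (Rabs (cos x) <= 1) by (apply Rabs_le; pose proof (COS_bound x); lra).
    assert (0 < / (x*x)) by (apply Rinv_0_lt_compat; nra). nra. }
  rewrite E, E2.
  assert (Rabs (cos A) <= 1) by (apply Rabs_le; pose proof (COS_bound A); lra).
  assert (Rabs (cos B) <= 1) by (apply Rabs_le; pose proof (COS_bound B); lra).
  assert (Rabs (- cos B / B - - cos A / A) <= 1/B + 1/A).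
  { replace (- cos B / B - - cos A / A) with (cos A * (1/A) - cos B * (1/B)) by (field; lra).
    eapply Rle_trans. apply Rabs_triang. rewrite Rabs_Ropp, !Rabs_mult.
    rewrite (Rabs_pos_eq (1/A)), (Rabs_pos_eq (1/B)).
    assert (0 < 1/A) by (apply Rdiv_lt_0_compat; lra). assert (0 < 1/B) by (apply Rdiv_lt_0_compat; lra).
    nra. left; apply Rdiv_lt_0_compat; lra. left; apply Rdiv_lt_0_compat; lra. }
  assert (T : forall x y, Rabs (x - y) <= Rabs x + Rabs y).
  { intros x y. unfold Rminus. eapply Rle_trans. apply Rabs_triang. rewrite Rabs_Ropp. lra. }
  eapply Rle_trans. apply T.
  replace (2/A) with ((1/B + 1/A) + ((- 1 / B) - (- 1 / A))) by (field; lra). lra.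
Qed.


Fixpoint Dk (n : nat) (x : R) : R :=
  match n with
  | O => 1
  | S m => Dk m x + 2 * cos (2 * INR (S m) * x)
  end.

Lemma Dk_der n x : ex_derive (Dk n) x.
Proof.
  induction n; simpl.
  - apply ex_derive_const.
  - apply (ex_derive_plus (Dk n) (fun x => 2 * cos (2 * INR (S n) * x))). auto.
    auto_derive. auto.
Qed.

Lemma Dk_cont n x : continuous (Dk n) x.
Proof. apply (ex_derive_continuous (K:=R_AbsRing) (V:=R_NormedModule)). apply Dk_der. Qed.

Lemma sin_nPI n : sin (INR n * PI) = 0.
Proof. apply sin_eq_0_1. exists (Z.of_nat n). now rewrite <- INR_IZR_INZ. Qed.

Lemma cos_int m : 0 < m -> RI (fun x => 2 * cos (2 * m * x)) 0 (PI/2) = sin (m * PI) / m.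
Proof.
  intros Hn.
  assert (D : is_RInt (fun x => 2 * cos (2 * m * x)) 0 (PI/2)
       (sin (2 * m * (PI/2)) / m - sin (2 * m * 0) / m)).
  { apply (is_RInt_derive (fun x => sin (2 * m * x) / m)).
    - intros x _. auto_derive. nz. field. nz.
    - intros x _. apply (ex_derive_continuous (K:=R_AbsRing) (V:=R_NormedModule) (fun x => 2 * cos (2 * m * x))); auto_derive; auto. }
  rewrite (RI_is _ _ _ _ D).
  replace (2 * m * (PI/2)) with (m * PI) by field.
  rewrite Rmult_0_r, sin_0. field. nz.
Qed.

Lemma Dk_int n : RI (Dk n) 0 (PI/2) = PI/2.
Proof.
  induction n.
  - simpl. unfold RI. rewrite RInt_const. unfold scal; simpl; unfold mult; simpl. ring.
  - change (Dk (S n)) with (fun x => Dk n x + 2 * cos (2 * INR (S n) * x)). rewrite RI_add. 2: apply exc, Dk_cont.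
    2: apply exc; intros x; apply (ex_derive_continuous (K:=R_AbsRing) (V:=R_NormedModule) (fun x => 2 * cos (2 * INR (S n) * x))); auto_derive; auto.
    rewrite IHn, cos_int, sin_nPI. field. apply Rgt_not_eq, lt_0_INR; lia. apply lt_0_INR; lia.
Qed.

Lemma Dk_sin n x : sin x * Dk n x = sin ((2 * INR n + 1) * x).
Proof.
  induction n.
  - simpl. rewrite Rmult_1_r. f_equal. ring.
  - change (Dk (S n) x) with (Dk n x + 2 * cos (2 * INR (S n) * x)).
    rewrite Rmult_plus_distr_l, IHn.
    rewrite S_INR.
    replace ((2 * (INR n + 1) + 1) * x) with ((2 * INR n + 1) * x + 2 * x) by ring.
    replace (2 * (INR n + 1) * x) with ((2 * INR n + 1) * x + x) by ring.
    set (a := (2 * INR n + 1) * x).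
    rewrite sin_plus, cos_plus, sin_2a, cos_2a.
    assert (E : sin x * sin x + cos x * cos x = 1) by (rewrite <- (sin2_cos2 x); unfold Rsqr; ring).
    rewrite <- (Rmult_1_r (sin a)) at 1. rewrite <- E. ring.
Qed.

Lemma Dk_bound n x : Rabs (Dk n x) <= 2 * INR n + 1.
Proof.
  induction n.
  - simpl. rewrite Rabs_R1. lra.
  - change (Dk (S n) x) with (Dk n x + 2 * cos (2 * INR (S n) * x)).
    eapply Rle_trans. apply Rabs_triang.
    rewrite Rabs_mult, (Rabs_pos_eq 2) by lra.
    assert (Rabs (cos (2 * INR (S n) * x)) <= 1) by (apply Rabs_le; apply COS_bound). rewrite S_INR in *. lra.
Qed.


Lemma PI2_le2 : PI / 2 <= 2.
Proof. pose proof PI_4. lra. Qed.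

Lemma sin_pos_in x : 0 < x <= PI/2 -> 0 < sin x.
Proof. intros [H1 H2]. apply sin_gt_0; auto. pose proof PI2_Rlt_PI. lra. Qed.

Lemma sin_le_x x : 0 <= x -> sin x <= x.
Proof. intros H. pose proof (abs_sin_le_pos x H). apply Rabs_le_between in H0 || idtac.
  pose proof (Rle_abs (sin x)). lra. Qed.

Lemma key_ineq x : 0 < x <= PI/2 -> x * x * cos x <= sin x * sin x.
Proof.
  intros [H1 H2]. pose proof PI2_le2.
  assert (Hs : x - x^3/6 <= sin x).
  { assert (H4 : x <= 4) by lra. destruct (pre_sin_bound x 0 ltac:(lra) H4) as [Hl _].
    replace (2*0+1)%nat with 1%nat in Hl by reflexivity. rewrite sa1 in Hl. exact Hl. }
  assert (Hc : cos x <= 1 - x^2/2 + x^4/24).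
  { assert (Hm : - PI / 2 <= x) by (pose proof PI_RGT_0; lra).
    destruct (cos_bound x 0 Hm H2) as [_ Hu].
    replace (2*(0+1))%nat with 2%nat in Hu by reflexivity. rewrite ca2 in Hu. exact Hu. }
  assert (Hp : 0 <= x - x^3/6) by (assert (x*x <= 4) by nra; simpl; nra).
  assert (Hsq : (x - x^3/6) * (x - x^3/6) <= sin x * sin x) by nra.
  assert (Hx2 : 0 <= x * x) by nra.
  assert (x * x * cos x <= x * x * (1 - x^2/2 + x^4/24)) by nra.
  assert (x * x * (1 - x^2/2 + x^4/24) <= (x - x^3/6) * (x - x^3/6)).
  { assert (x*x <= 4) by nra. simpl. nra. }
  lra.
Qed.

Definition hf (x : R) : R := 1 / sin x - 1 / x.
Definition hd (x : R) : R := - cos x / (sin x * sin x) + 1 / (x * x).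

Lemma hf_nonneg x : 0 < x <= PI/2 -> 0 <= hf x.
Proof.
  intros Hx. unfold hf. pose proof (sin_pos_in x Hx). pose proof (sin_le_x x ltac:(lra)).
  unfold Rdiv. rewrite !Rmult_1_l. assert (/ x <= / sin x) by (apply Rinv_le_contravar; lra). lra.
Qed.

Lemma hd_nonneg x : 0 < x <= PI/2 -> 0 <= hd x.
Proof.
  intros Hx. unfold hd. pose proof (sin_pos_in x Hx). pose proof (key_ineq x Hx).
  assert (0 < sin x * sin x) by nra. assert (0 < x * x) by nra.
  replace (- cos x / (sin x * sin x) + 1 / (x * x)) with
    ((sin x * sin x - x * x * cos x) / ((sin x * sin x) * (x * x))) by (field; lra).
  apply Rdiv_le_0_compat; nra.
Qed.

Lemma hf_PI2 : hf (PI/2) <= 1.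
Proof.
  unfold hf. rewrite sin_PI2. pose proof PI2_1.
  assert (0 < 1 / (PI/2)) by (apply Rdiv_lt_0_compat; lra). lra.
Qed.

Lemma RL M eps : 0 < M -> 0 < eps <= PI/2 ->
  Rabs (RI (fun x => sin (M * x) * hf x) eps (PI/2)) <= 2 / M.
Proof.
  intros HM [He1 He2].
  set (b := PI/2) in *.
  assert (Hin : forall x, Rmin eps b <= x <= Rmax eps b -> 0 < x <= PI/2).
  { intros x Hx. rewrite Rmin_left in Hx by lra. rewrite Rmax_right in Hx by lra. unfold b in *. lra. }
  assert (Hsn : forall x, Rmin eps b <= x <= Rmax eps b -> sin x <> 0).
  { intros x Hx. apply Rgt_not_eq. apply sin_pos_in. auto. }
  assert (Hxn : forall x, Rmin eps b <= x <= Rmax eps b -> x <> 0).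
  { intros x Hx. specialize (Hin x Hx). lra. }
  assert (DH : is_RInt hd eps b (hf b - hf eps)).
  { apply (is_RInt_derive hf).
    - intros x Hx. specialize (Hsn x Hx). specialize (Hxn x Hx). unfold hf, hd. auto_derive.
      repeat split; auto. field. auto.
    - intros x Hx. specialize (Hsn x Hx). specialize (Hxn x Hx).
      apply (ex_derive_continuous (K:=R_AbsRing) (V:=R_NormedModule) hd). unfold hd. auto_derive.
      repeat split; auto; apply Rmult_integral_contrapositive; auto. }
  assert (DF : is_RInt (fun x => sin (M * x) * hf x - cos (M * x) / M * hd x) eps b
                 ((- cos (M * b) / M * hf b) - (- cos (M * eps) / M * hf eps))).
  { apply (is_RInt_derive (fun x => - cos (M * x) / M * hf x)).
    - intros x Hx. specialize (Hsn x Hx). specialize (Hxn x Hx). unfold hf, hd. auto_derive.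
      repeat split; auto; lra. field. repeat split; auto; lra.
    - intros x Hx. specialize (Hsn x Hx). specialize (Hxn x Hx).
      apply (ex_derive_continuous (K:=R_AbsRing) (V:=R_NormedModule) (fun x => sin (M * x) * hf x - cos (M * x) / M * hd x)).
      unfold hf, hd. auto_derive.
      repeat split; auto; try lra; apply Rmult_integral_contrapositive; auto. }
  assert (exh : ex_RInt hd eps b) by (eexists; eauto).
  assert (exc1 : ex_RInt (fun x => cos (M * x) / M * hd x) eps b).
  { apply exc_on. intros x Hx. specialize (Hsn x Hx). specialize (Hxn x Hx).
    apply (ex_derive_continuous (K:=R_AbsRing) (V:=R_NormedModule) (fun x => cos (M * x) / M * hd x)).
    unfold hd. auto_derive. repeat split; auto; try lra; apply Rmult_integral_contrapositive; auto. }
  assert (exF : ex_RInt (fun x => sin (M * x) * hf x - cos (M * x) / M * hd x) eps b) by (eexists; eauto).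
  assert (E : RI (fun x => sin (M * x) * hf x) eps b =
     RI (fun x => sin (M * x) * hf x - cos (M * x) / M * hd x) eps b
     + RI (fun x => cos (M * x) / M * hd x) eps b).
  { rewrite <- RI_add; auto. apply RI_ext. intros; ring. }
  rewrite E, (RI_is _ _ _ _ DF).
  assert (B1 : Rabs (RI (fun x => cos (M * x) / M * hd x) eps b) <= (hf b - hf eps) / M).
  { rewrite <- (RI_is _ _ _ _ DH). unfold Rdiv at 2. rewrite Rmult_comm, <- RI_scal by auto.
    apply RI_abs_le; auto. apply (ex_RInt_scal hd eps b (/M)); auto.
    intros x Hx. assert (Hx' : 0 < x <= PI/2) by (unfold b in *; lra).
    pose proof (hd_nonneg x Hx').
    unfold Rdiv. rewrite !Rabs_mult, Rabs_inv, (Rabs_pos_eq M), (Rabs_pos_eq (hd x)) by lra.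
    assert (Rabs (cos (M*x)) <= 1) by (apply Rabs_le; apply COS_bound).
    assert (0 < / M) by (apply Rinv_0_lt_compat; lra).
    assert (0 <= / M * hd x) by (apply Rmult_le_pos; lra).
    nra. }
  assert (hb : 0 <= hf b) by (apply hf_nonneg; unfold b; pose proof PI2_RGT_0; lra).
  assert (ha : 0 <= hf eps) by (apply hf_nonneg; unfold b in *; lra).
  assert (hb1 : hf b <= 1) by apply hf_PI2.
  assert (ca : Rabs (cos (M * eps)) <= 1) by (apply Rabs_le; apply COS_bound).
  assert (cb : Rabs (cos (M * b)) <= 1) by (apply Rabs_le; apply COS_bound).
  assert (B2 : Rabs (- cos (M * b) / M * hf b - - cos (M * eps) / M * hf eps) <= (hf b + hf eps) / M).
  { replace (- cos (M * b) / M * hf b - - cos (M * eps) / M * hf eps) with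
      ((cos (M * eps) * hf eps - cos (M * b) * hf b) / M) by (field; lra).
    unfold Rdiv. rewrite Rabs_mult, Rabs_inv, (Rabs_pos_eq M) by lra.
    apply Rmult_le_compat_r. left; apply Rinv_0_lt_compat; lra.
    unfold Rminus. eapply Rle_trans. apply Rabs_triang. rewrite Rabs_Ropp, !Rabs_mult.
    rewrite (Rabs_pos_eq (hf eps)), (Rabs_pos_eq (hf b)) by lra. nra. }
  eapply Rle_trans. apply Rabs_triang.
  apply Rle_trans with ((hf b + hf eps) / M + (hf b - hf eps) / M). lra.
  replace ((hf b + hf eps) / M + (hf b - hf eps) / M) with (2 * hf b / M) by (field; lra).
  unfold Rdiv. apply Rmult_le_compat_r. left; apply Rinv_0_lt_compat; lra. lra.
Qed.


Lemma Si_odd n : let M := 2 * INR n + 1 in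
  Rabs (RI (Ksinc 1) 0 (M * (PI/2)) - PI/2) <= 4 / M.
Proof.
  intros M. assert (HM : 1 <= M) by (unfold M; pose proof (pos_INR n); lra).
  pose proof PI2_1 as HP.
  rewrite <- Ksinc_scale by lra.
  set (eps := 1 / (M * M)).
  assert (He : 0 < eps <= PI/2).
  { unfold eps. split. apply Rdiv_lt_0_compat; nra.
    apply Rle_trans with 1; [|lra]. unfold Rdiv. rewrite Rmult_1_l.
    rewrite <- Rinv_1. apply Rinv_le_contravar; nra. }
  assert (exK : forall a b, ex_RInt (Ksinc M) a b) by (intros; apply exc, Ksinc_cont).
  assert (exD : forall a b, ex_RInt (Dk n) a b) by (intros; apply exc, Dk_cont).
  replace (RI (Ksinc M) 0 (PI/2) - PI/2) with (RI (fun x => Ksinc M x - Dk n x) 0 (PI/2))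
    by (rewrite RI_sub by auto; rewrite Dk_int; reflexivity).
  assert (exKD : forall a b, ex_RInt (fun x => Ksinc M x - Dk n x) a b).
  { intros. apply (ex_RInt_minus (V:=R_NormedModule) (Ksinc M) (Dk n)); auto. }
  rewrite <- (RI_chasles _ 0 eps (PI/2)) by auto.
  assert (B1 : Rabs (RI (fun x => Ksinc M x - Dk n x) 0 eps) <= (eps - 0) * (2 * M)).
  { apply RI_abs_const; auto. lra. intros x _.
    unfold Rminus. eapply Rle_trans. apply Rabs_triang. rewrite Rabs_Ropp.
    pose proof (Ksinc_bound M x). pose proof (Dk_bound n x). rewrite (Rabs_pos_eq M) in H by lra.
    fold M in H0. lra. }
  assert (E2 : RI (fun x => Ksinc M x - Dk n x) eps (PI/2) = -1 * RI (fun x => sin (M * x) * hf x) eps (PI/2)).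
  { rewrite <- RI_scal.
    2: { apply exc_on. intros x Hx. rewrite Rmin_left in Hx by lra. rewrite Rmax_right in Hx by lra.
         assert (sin x <> 0) by (apply Rgt_not_eq, sin_pos_in; lra).
         apply (ex_derive_continuous (K:=R_AbsRing) (V:=R_NormedModule) (fun x => sin (M * x) * hf x)).
         unfold hf. auto_derive. repeat split; auto; lra. }
    apply RI_ext_on. intros x Hx. rewrite Rmin_left in Hx by lra. rewrite Rmax_right in Hx by lra.
    assert (Hs : 0 < sin x) by (apply sin_pos_in; lra).
    rewrite Ksinc_nz by lra.
    assert (Dk n x = sin (M * x) / sin x).
    { pose proof (Dk_sin n x) as HDs. change (sin x * Dk n x = sin (M * x)) in HDs.
      rewrite <- HDs. field. lra. }
    rewrite H. unfold hf. field. split; lra. }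
  rewrite E2. pose proof (RL M eps ltac:(lra) He) as B2.
  eapply Rle_trans. apply Rabs_triang. rewrite Rabs_mult, Rabs_m1.
  replace (4 / M) with ((eps - 0) * (2 * M) + 2 / M). lra.
  unfold eps. field. lra.
Qed.

Lemma Si_bound B : 0 < B -> Rabs (RI (Ksinc 1) 0 B - PI/2) <= 6 / B.
Proof.
  intros HB. destruct (INR_archimed 1 B ltac:(lra)) as [n Hn]. rewrite Rmult_1_r in Hn.
  pose proof (Si_odd n) as H. simpl in H. set (M := 2 * INR n + 1) in *.
  pose proof PI2_1 as HP.
  assert (HM : B <= M) by (unfold M; pose proof (pos_INR n); lra).
  assert (HMB : B <= M * (PI/2)) by nra.
  pose proof (Si_cauchy B (M * (PI/2)) ltac:(lra)) as Hc.
  rewrite <- (RI_chasles _ 0 B (M * (PI/2))) in H by (apply exc, Ksinc_cont).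
  assert (4 / M <= 4 / B).
  { unfold Rdiv. apply Rmult_le_compat_l. lra. apply Rinv_le_contravar; lra. }
  replace (RI (Ksinc 1) 0 B - PI / 2) with ((RI (Ksinc 1) 0 B + RI (Ksinc 1) B (M * (PI / 2)) - PI/2) - RI (Ksinc 1) B (M * (PI / 2))) by ring.
  unfold Rminus at 1. eapply Rle_trans. apply Rabs_triang. rewrite Rabs_Ropp.
  replace (6 / B) with (4 / B + 2 / B) by (field; lra). lra.
Qed.


Definition tends (g : R -> R) (L : R) : Prop :=
  forall eps, 0 < eps -> exists M, forall B, M <= B -> Rabs (g B - L) < eps.

Lemma tends_bound g L B0 C : 0 < B0 -> 0 <= C ->
  (forall B, B0 <= B -> Rabs (g B - L) <= C / B) -> tends g L.
Proof.
  intros HB0 HC H eps He. exists (Rmax B0 ((C + 1) / eps)). intros B HB.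
  assert (H1 : B0 <= B) by (eapply Rle_trans; [apply Rmax_l|exact HB]).
  assert (H2 : (C+1)/eps <= B) by (eapply Rle_trans; [apply Rmax_r|exact HB]).
  eapply Rle_lt_trans. apply H; auto.
  assert (0 < B) by lra.
  apply (Rmult_lt_reg_r B); auto. unfold Rdiv. rewrite Rmult_assoc, Rinv_l, Rmult_1_r by lra.
  apply (Rmult_le_compat_r eps) in H2; [|lra].
  unfold Rdiv in H2. rewrite Rmult_assoc, Rinv_l, Rmult_1_r in H2 by lra. lra.
Qed.

Lemma tends_ext g h L B0 : (forall B, B0 <= B -> g B = h B) -> tends h L -> tends g L.
Proof.
  intros He H eps Heps. destruct (H eps Heps) as [M HM]. exists (Rmax M B0). intros B HB.
  rewrite He. apply HM. eapply Rle_trans; [apply Rmax_l|exact HB].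
  eapply Rle_trans; [apply Rmax_r|exact HB].
Qed.

Lemma tends_plus g h L1 L2 : tends g L1 -> tends h L2 -> tends (fun B => g B + h B) (L1 + L2).
Proof.
  intros H1 H2 eps He. destruct (H1 (eps/2) ltac:(lra)) as [M1 HM1].
  destruct (H2 (eps/2) ltac:(lra)) as [M2 HM2]. exists (Rmax M1 M2). intros B HB.
  specialize (HM1 B (Rle_trans _ _ _ (Rmax_l _ _) HB)).
  specialize (HM2 B (Rle_trans _ _ _ (Rmax_r _ _) HB)).
  replace (g B + h B - (L1 + L2)) with ((g B - L1) + (h B - L2)) by ring.
  eapply Rle_lt_trans. apply Rabs_triang. lra.
Qed.

Lemma tends_scal g L c : tends g L -> tends (fun B => c * g B) (c * L).
Proof.
  intros H eps He. destruct (H (eps / (Rabs c + 1))) as [M HM].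
  apply Rdiv_lt_0_compat; [lra|]. pose proof (Rabs_pos c); lra.
  exists M. intros B HB. specialize (HM B HB).
  replace (c * g B - c * L) with (c * (g B - L)) by ring. rewrite Rabs_mult.
  assert (0 <= Rabs c) by apply Rabs_pos.
  apply Rle_lt_trans with ((Rabs c + 1) * Rabs (g B - L)). assert (0 <= Rabs (g B - L)) by apply Rabs_pos. nra.
  apply (Rmult_lt_compat_l (Rabs c + 1)) in HM; [|lra].
  replace ((Rabs c + 1) * (eps / (Rabs c + 1))) with eps in HM by (field; lra). lra.
Qed.

Lemma tends_minus g h L1 L2 : tends g L1 -> tends h L2 -> tends (fun B => g B - h B) (L1 - L2).
Proof.
  intros H1 H2. apply (tends_ext _ (fun B => g B + (-1) * h B) _ 0). intros; ring.
  replace (L1 - L2) with (L1 + (-1) * L2) by ring. apply tends_plus; auto. apply tends_scal; auto.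
Qed.

Lemma tends_const c : tends (fun _ => c) c.
Proof. intros eps He. exists 0. intros. rewrite Rminus_diag, Rabs_R0. auto. Qed.

Lemma tends_approx g h L B0 C : 0 < B0 -> 0 <= C -> tends h L ->
  (forall B, B0 <= B -> Rabs (g B - h B) <= C / B) -> tends g L.
Proof.
  intros HB0 HC Hh Hb.
  assert (T : tends (fun B => g B - h B) 0) by (apply (tends_bound _ _ B0 C); auto; intros; rewrite Rminus_0_r; auto).
  apply (tends_ext _ (fun B => (g B - h B) + h B) _ 0). intros; ring.
  replace L with (0 + L) by ring. apply tends_plus; auto.
Qed.

Definition sg (x : R) : R :=
  match Rlt_dec 0 x with
  | left _ => 1
  | right _ => match Rlt_dec x 0 with left _ => -1 | right _ => 0 end
  end.

Lemma sg_pos x : 0 < x -> sg x = 1.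
Proof. intros H. unfold sg. destruct (Rlt_dec 0 x); [reflexivity|lra]. Qed.
Lemma sg_neg x : x < 0 -> sg x = -1.
Proof. intros H. unfold sg. destruct (Rlt_dec 0 x); [lra|]. destruct (Rlt_dec x 0); [reflexivity|lra]. Qed.
Lemma sg_zero : sg 0 = 0.
Proof. unfold sg. destruct (Rlt_dec 0 0); [lra|]. destruct (Rlt_dec 0 0); [lra|reflexivity]. Qed.

Lemma sinc_pos_lim nu : 0 < nu -> tends (fun B => RI (Ksinc nu) 0 B) (PI/2).
Proof.
  intros Hn. apply (tends_bound _ _ 1 (6 / nu)). lra. left; apply Rdiv_lt_0_compat; lra.
  intros B HB. rewrite Ksinc_scale by lra. eapply Rle_trans. apply Si_bound. nra.
  right. field. split; lra.
Qed.

Lemma sinc_lim nu : tends (fun B => RI (Ksinc nu) 0 B) (PI/2 * sg nu).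
Proof.
  destruct (Rlt_dec 0 nu) as [Hp|Hp].
  - rewrite sg_pos, Rmult_1_r by auto. apply sinc_pos_lim; auto.
  - destruct (Rlt_dec nu 0) as [Hn|Hn].
    + rewrite sg_neg by auto.
      apply (tends_ext _ (fun B => -1 * RI (Ksinc (- nu)) 0 B) _ 0).
      { intros B _. rewrite <- RI_scal by (apply exc, Ksinc_cont). apply RI_ext. intros x.
        rewrite <- (Ropp_involutive nu) at 1. rewrite Ksinc_opp. ring. }
      replace (PI / 2 * -1) with (-1 * (PI/2)) by ring. apply tends_scal. apply sinc_pos_lim. lra.
    + assert (nu = 0) by lra. subst. rewrite sg_zero, Rmult_0_r.
      apply (tends_ext _ (fun _ => 0) _ 0). intros B _.
      rewrite (RI_ext _ (fun _ => 0 * 1)). rewrite RI_scal. ring. apply exc; intros; apply continuous_const.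
      intros; rewrite Ksinc_zero; ring. apply tends_const.
Qed.


Lemma trig_id A C be ph :
  (cos (C + ph) * sin (A + be) + cos (ph - C) * sin (be - A)) * sin A =
  1/2 * sin (be + ph) * (sin (2*A + C) - sin C) + 1/2 * sin (be - ph) * (sin (2*A - C) + sin C).
Proof.
  assert (E1 : sin (2*A + C) - sin C = 2 * sin A * cos (A + C)).
  { rewrite sin_plus, cos_plus, sin_2a, cos_2a_sin. ring. }
  assert (E2 : sin (2*A - C) + sin C = 2 * sin A * cos (A - C)).
  { rewrite sin_minus, cos_minus, sin_2a, cos_2a_sin. ring. }
  rewrite E1, E2.
  rewrite !sin_plus, !cos_plus, !sin_minus, !cos_minus. field.
Qed.

Definition Pf (xi ka ph d u : R) : R := cos (xi * u + ph) * sin (ka * (u + d)) * Ksinc ka u.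

Lemma Pf_sym xi ka ph d u :
  Pf xi ka ph d u + Pf xi ka ph d (-u) =
  1/2 * sin (ka*d + ph) * (Ksinc (2*ka + xi) u + Ksinc (-xi) u)
  + 1/2 * sin (ka*d - ph) * (Ksinc (2*ka - xi) u + Ksinc xi u).
Proof.
  unfold Pf. rewrite Ksinc_even.
  destruct (Req_EM_T u 0) as [->|Hu].
  - rewrite !Ksinc_0. rewrite Ropp_0, !Rmult_0_r, !Rplus_0_l.
    rewrite sin_plus, sin_minus. field.
  - rewrite !Ksinc_nz by auto.
    set (A := ka * u). set (C := xi * u). set (be := ka * d).
    replace (xi * - u + ph) with (ph - C) by (unfold C; ring).
    replace (xi * u + ph) with (C + ph) by (unfold C; ring).
    replace (ka * (u + d)) with (A + be) by (unfold A, be; ring).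
    replace (ka * (- u + d)) with (be - A) by (unfold A, be; ring).
    replace ((2 * ka + xi) * u) with (2 * A + C) by (unfold A, C; ring).
    replace ((2 * ka - xi) * u) with (2 * A - C) by (unfold A, C; ring).
    replace (- xi * u) with (- C) by (unfold C; ring).
    rewrite sin_neg.
    pose proof (trig_id A C be ph) as T.
    apply Rminus_diag_uniq.
    transitivity ((((cos (C + ph) * sin (A + be) + cos (ph - C) * sin (be - A)) * sin A) -
      (1/2 * sin (be + ph) * (sin (2*A + C) - sin C) + 1/2 * sin (be - ph) * (sin (2*A - C) + sin C))) / u).
    + field. auto.
    + rewrite T. field. auto.
Qed.

Lemma cont_mul (f g : R -> R) x : continuous f x -> continuous g x -> continuous (fun y => f y * g y) x.
Proof. intros. apply (continuous_mult f g x); auto. Qed.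

Lemma Pf_cont xi ka ph d x : continuous (Pf xi ka ph d) x.
Proof.
  unfold Pf. apply cont_mul. apply cont_mul.
  apply (ex_derive_continuous (K:=R_AbsRing) (V:=R_NormedModule) (fun u => cos (xi * u + ph))); auto_derive; auto.
  apply (ex_derive_continuous (K:=R_AbsRing) (V:=R_NormedModule) (fun u => sin (ka * (u + d)))); auto_derive; auto.
  apply Ksinc_cont.
Qed.

Lemma Pf_lim xi ka ph d : 0 < xi -> 0 < ka ->
  tends (fun B => RI (Pf xi ka ph d) (-B) B) (PI/4 * (1 + sg (2*ka - xi)) * sin (ka*d - ph)).
Proof.
  intros Hxi Hka.
  apply (tends_ext _ (fun B =>
     1/2 * sin (ka*d + ph) * (RI (Ksinc (2*ka + xi)) 0 B + RI (Ksinc (-xi)) 0 B)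
   + 1/2 * sin (ka*d - ph) * (RI (Ksinc (2*ka - xi)) 0 B + RI (Ksinc xi) 0 B)) _ 0).
  { intros B _. rewrite RI_sym by apply Pf_cont.
    rewrite (RI_ext _ _ _ _ (Pf_sym xi ka ph d)).
    assert (ek : forall nu a b, ex_RInt (Ksinc nu) a b) by (intros; apply exc, Ksinc_cont).
    rewrite RI_add, !RI_scal, !RI_add; auto.
    - apply (ex_RInt_plus (V:=R_NormedModule) (Ksinc _) (Ksinc _)); auto.
    - apply (ex_RInt_plus (V:=R_NormedModule) (Ksinc _) (Ksinc _)); auto.
    - apply (ex_RInt_scal (V:=R_NormedModule) (fun u => Ksinc _ u + Ksinc _ u)).
      apply (ex_RInt_plus (V:=R_NormedModule) (Ksinc _) (Ksinc _)); auto.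
    - apply (ex_RInt_scal (V:=R_NormedModule) (fun u => Ksinc _ u + Ksinc _ u)).
      apply (ex_RInt_plus (V:=R_NormedModule) (Ksinc _) (Ksinc _)); auto. }
  replace (PI/4 * (1 + sg (2*ka - xi)) * sin (ka*d - ph)) with
    (1/2 * sin (ka*d + ph) * (PI/2 * sg (2*ka + xi) + PI/2 * sg (-xi))
   + 1/2 * sin (ka*d - ph) * (PI/2 * sg (2*ka - xi) + PI/2 * sg xi)).
  - apply tends_plus; apply tends_scal; apply tends_plus; apply sinc_lim.
  - rewrite (sg_pos (2*ka+xi)) by lra. rewrite (sg_neg (-xi)) by lra. rewrite (sg_pos xi) by lra.
    field.
Qed.


Definition Phi (xi ka ph d u : R) : R := cos (xi * u + ph) * Ksinc ka u * Ksinc ka (u + d).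

Lemma Phi_split xi ka ph d u : d <> 0 ->
  Phi xi ka ph d u = / d * (Pf xi ka ph d u - Pf xi ka (ph - xi * d) (- d) (u + d)).
Proof.
  intros Hd. unfold Phi, Pf.
  replace (ka * (u + d + - d)) with (ka * u) by ring.
  replace (xi * (u + d) + (ph - xi * d)) with (xi * u + ph) by ring.
  destruct (Req_EM_T u 0) as [->|Hu].
  - rewrite !Rmult_0_r, sin_0, Ksinc_0, !Rplus_0_l, Ksinc_nz by auto. field. auto.
  - destruct (Req_EM_T (u + d) 0) as [Hud|Hud].
    + rewrite Hud, Ksinc_0, Rmult_0_r, sin_0. rewrite Ksinc_nz by auto.
      replace u with (-d) by lra. replace (ka * - d) with (- (ka * d)) by ring. rewrite sin_neg.
      field. auto.
    + rewrite !Ksinc_nz by auto. field. repeat split; auto.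
Qed.

Lemma Phi_cont xi ka ph d x : continuous (Phi xi ka ph d) x.
Proof.
  unfold Phi. apply cont_mul. apply cont_mul.
  apply (ex_derive_continuous (K:=R_AbsRing) (V:=R_NormedModule) (fun u => cos (xi * u + ph))); auto_derive; auto.
  apply Ksinc_cont.
  apply (continuous_comp (fun u => u + d) (Ksinc ka) x).
  apply (ex_derive_continuous (K:=R_AbsRing) (V:=R_NormedModule) (fun u => u + d)); auto_derive; auto.
  apply Ksinc_cont.
Qed.

Lemma RI_abs_const2 (f : R -> R) a b K : (forall x, continuous f x) ->
  (forall x, Rmin a b <= x <= Rmax a b -> Rabs (f x) <= K) -> Rabs (RI f a b) <= Rabs (b - a) * K.
Proof.
  intros Hc H. destruct (Rle_dec a b) as [Hab|Hab].
  - rewrite (Rabs_pos_eq (b - a)) by lra. apply RI_abs_const; auto. apply exc; auto.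
    intros x Hx. apply H. rewrite Rmin_left, Rmax_right; lra.
  - rewrite RI_swap by (apply exc; auto). rewrite Rabs_Ropp.
    rewrite (Rabs_left (b - a)) by (apply Rnot_le_lt in Hab; lra). replace (- (b - a)) with (a - b) by ring.
    apply RI_abs_const; auto. lra. apply exc; auto.
    intros x Hx. apply H. rewrite Rmin_right, Rmax_left; lra.
Qed.

Lemma Pf_bound xi ka ph d v : v <> 0 -> Rabs (Pf xi ka ph d v) <= / Rabs v.
Proof.
  intros Hv. unfold Pf. rewrite !Rabs_mult.
  assert (Rabs (cos (xi * v + ph)) <= 1) by (apply Rabs_le; apply COS_bound).
  assert (Rabs (sin (ka * (v + d))) <= 1) by (apply Rabs_le; apply SIN_bound).
  pose proof (Ksinc_bound2 ka v Hv).
  pose proof (Rabs_pos (cos (xi * v + ph))). pose proof (Rabs_pos (sin (ka * (v + d)))).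
  pose proof (Rabs_pos (Ksinc ka v)).
  assert (Rabs (cos (xi * v + ph)) * Rabs (sin (ka * (v + d))) <= 1) by nra.
  nra.
Qed.

Lemma Pf_end xi ka ph d' c d B : 2 * Rabs d <= B -> 0 < B -> Rabs c = B ->
  Rabs (RI (Pf xi ka ph d') c (c + d)) <= Rabs d * (2 / B).
Proof.
  intros H1 H2 H3. replace (Rabs d) with (Rabs (c + d - c)) at 1 by (f_equal; ring).
  apply RI_abs_const2. apply Pf_cont.
  intros x Hx.
  assert (Hx' : B / 2 <= Rabs x).
  { assert (Rabs (x - c) <= Rabs d).
    { unfold Rmin, Rmax in Hx. destruct (Rle_dec c (c+d)); apply Rabs_le_between; split; try lra;
      pose proof (Rabs_pos d); pose proof (Rle_abs d); pose proof (Rle_abs (-d)); rewrite Rabs_Ropp in *; lra. }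
    pose proof (Rabs_triang_inv c (c - x)). replace (c - (c - x)) with x in H0 by ring.
    rewrite <- Rabs_Ropp in H. replace (- (x - c)) with (c - x) in H by ring. lra. }
  assert (x <> 0) by (intros ->; rewrite Rabs_R0 in Hx'; lra).
  eapply Rle_trans. apply Pf_bound; auto.
  replace (2 / B) with (/ (B / 2)) by (field; lra). apply Rinv_le_contravar; lra.
Qed.

Lemma Phi_lim xi ka ph d : 0 < xi -> 0 < ka -> d <> 0 ->
  tends (fun B => RI (Phi xi ka ph d) (-B) B)
    (/ d * (PI/4 * (1 + sg (2*ka - xi)) * sin (ka*d - ph)
          - PI/4 * (1 + sg (2*ka - xi)) * sin (ka*(-d) - (ph - xi * d)))).
Proof.
  intros Hxi Hka Hd.
  set (P1 := Pf xi ka ph d). set (P2 := Pf xi ka (ph - xi * d) (-d)).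
  assert (C1 : forall x, continuous P1 x) by (intros; apply Pf_cont).
  assert (C2 : forall x, continuous P2 x) by (intros; apply Pf_cont).
  apply (tends_approx _ (fun B => / d * (RI P1 (-B) B - RI P2 (-B) B)) _ (2 * Rabs d + 1) 4).
  - pose proof (Rabs_pos d). lra.
  - lra.
  - apply tends_scal. apply tends_minus; apply Pf_lim; auto.
  - intros B HB. pose proof (Rabs_pos d) as Hdp. assert (HB0 : 0 < B) by lra.
    assert (C2s : forall x, continuous (fun u => P2 (u + d)) x).
    { intros x. apply (continuous_comp (fun u => u + d) P2 x).
      apply (ex_derive_continuous (K:=R_AbsRing) (V:=R_NormedModule) (fun u => u + d)); auto_derive; auto.
      apply C2. }
    rewrite (RI_ext _ (fun u => / d * (P1 u - P2 (u + d)))) by (intros; apply Phi_split; auto).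
    assert (C3 : forall x, continuous (fun u => P1 u - P2 (u + d)) x).
    { intros x. apply (continuous_minus (V:=R_NormedModule) P1 (fun u => P2 (u + d))); auto. }
    rewrite (RI_scal (fun u => P1 u - P2 (u + d))) by (apply exc; exact C3).
    rewrite (RI_sub P1 (fun u => P2 (u + d))) by (apply exc; auto).
    rewrite RI_shift by auto.
    rewrite <- (RI_chasles P2 (-B + d) (-B) (B + d)) by (apply exc; auto).
    rewrite <- (RI_chasles P2 (-B) B (B + d)) by (apply exc; auto).
    rewrite (RI_swap P2 (-B) (-B + d)) by (apply exc; auto).
    assert (H1 : Rabs (RI P2 (-B) (-B + d)) <= Rabs d * (2 / B)).
    { apply Pf_end; try lra. rewrite Rabs_Ropp, Rabs_pos_eq; lra. }
    assert (H2 : Rabs (RI P2 B (B + d)) <= Rabs d * (2 / B)).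
    { apply Pf_end; try lra. rewrite Rabs_pos_eq; lra. }
    replace (/ d * (RI P1 (- B) B - (- RI P2 (- B) (- B + d) + (RI P2 (- B) B + RI P2 B (B + d)))) -
     / d * (RI P1 (- B) B - RI P2 (- B) B)) with (/ d * (RI P2 (- B) (- B + d) - RI P2 B (B + d))) by ring.
    rewrite Rabs_mult, Rabs_inv.
    assert (Ha : 0 < Rabs d) by (apply Rabs_pos_lt; auto).
    assert (Rabs (RI P2 (- B) (- B + d) - RI P2 B (B + d)) <= 2 * (Rabs d * (2 / B))).
    { unfold Rminus. eapply Rle_trans. apply Rabs_triang. rewrite Rabs_Ropp. lra. }
    apply Rle_trans with (/ Rabs d * (2 * (Rabs d * (2 / B)))).
    apply Rmult_le_compat_l; auto. left; apply Rinv_0_lt_compat; auto.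
    right. field. split; lra.
Qed.


Lemma Phi_decay xi ka ph d u : 2 * Rabs d + 1 <= Rabs u -> Rabs (Phi xi ka ph d u) <= 2 / (u * u).
Proof.
  intros Hu. pose proof (Rabs_pos d).
  assert (Hu0 : u <> 0) by (intros ->; rewrite Rabs_R0 in Hu; lra).
  assert (Hud : Rabs u / 2 <= Rabs (u + d)).
  { pose proof (Rabs_triang_inv u (-d)). rewrite Rabs_Ropp in H0.
    replace (u - - d) with (u + d) in H0 by ring. lra. }
  assert (Hud0 : u + d <> 0) by (intros E; rewrite E, Rabs_R0 in Hud; lra).
  unfold Phi. rewrite !Rabs_mult.
  assert (Rabs (cos (xi * u + ph)) <= 1) by (apply Rabs_le; apply COS_bound).
  pose proof (Ksinc_bound2 ka u Hu0). pose proof (Ksinc_bound2 ka (u + d) Hud0).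
  assert (Hp : 0 < Rabs u) by lra.
  assert (/ Rabs (u + d) <= 2 / Rabs u).
  { replace (2 / Rabs u) with (/ (Rabs u / 2)) by (field; lra). apply Rinv_le_contravar; lra. }
  pose proof (Rabs_pos (cos (xi * u + ph))). pose proof (Rabs_pos (Ksinc ka u)). pose proof (Rabs_pos (Ksinc ka (u + d))).
  assert (0 < / Rabs u) by (apply Rinv_0_lt_compat; lra).
  assert (Hp2 : Rabs (cos (xi * u + ph)) * Rabs (Ksinc ka u) * Rabs (Ksinc ka (u + d)) <= 1 * (/ Rabs u) * (2 / Rabs u)).
  { apply Rmult_le_compat. apply Rmult_le_pos; lra. lra.
    apply Rmult_le_compat; lra. lra. }
  eapply Rle_trans. exact Hp2.
  assert (Eu : u * u = Rabs u * Rabs u) by (rewrite <- Rabs_mult; symmetry; apply Rabs_pos_eq; nra).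
  rewrite Eu. right. field. lra.
Qed.

Lemma inv_sq_int x y : 0 < x * y -> is_RInt (fun u => 2 / (u * u)) x y (2 / x - 2 / y).
Proof.
  intros Hxy.
  assert (Hz : forall u, Rmin x y <= u <= Rmax x y -> u <> 0).
  { intros u Hu. unfold Rmin, Rmax in Hu. destruct (Rle_dec x y); intros ->; nra. }
  replace (2 / x - 2 / y) with ((- 2 / y) - (- 2 / x)) by (field; split; intros ->; nra).
  apply (is_RInt_derive (fun u => - 2 / u)).
  - intros u Hu. specialize (Hz u Hu). auto_derive; auto. field; auto.
  - intros u Hu. specialize (Hz u Hu).
    apply (ex_derive_continuous (K:=R_AbsRing) (V:=R_NormedModule) (fun u => 2 / (u * u))).
    auto_derive. repeat split; auto; apply Rmult_integral_contrapositive; auto.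
Qed.

Lemma Phi_tail_r xi ka ph d r b : 2 * Rabs d + 1 <= r -> r <= b ->
  Rabs (RI (Phi xi ka ph d) r b) <= 2 / r.
Proof.
  intros Hr Hrb. pose proof (Rabs_pos d).
  assert (I := inv_sq_int r b ltac:(nra)).
  eapply Rle_trans. apply RI_abs_le with (g := fun u => 2 / (u * u)); auto.
  apply exc, Phi_cont. eexists; eauto.
  intros x Hx. apply Phi_decay. rewrite (Rabs_pos_eq x); lra.
  rewrite (RI_is _ _ _ _ I). assert (0 < 2 / b) by (apply Rdiv_lt_0_compat; lra). lra.
Qed.

Lemma Phi_tail_l xi ka ph d r a : 2 * Rabs d + 1 <= r -> a <= - r ->
  Rabs (RI (Phi xi ka ph d) a (-r)) <= 2 / r.
Proof.
  intros Hr Hrb. pose proof (Rabs_pos d).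
  assert (I := inv_sq_int a (-r) ltac:(nra)).
  eapply Rle_trans. apply RI_abs_le with (g := fun u => 2 / (u * u)); auto.
  apply exc, Phi_cont. eexists; eauto.
  intros x Hx. apply Phi_decay. rewrite (Rabs_left x); lra.
  rewrite (RI_is _ _ _ _ I). assert (2 / a < 0).
  { unfold Rdiv. apply Rmult_pos_neg. lra. apply Rinv_lt_0_compat. lra. }
  replace (2 / - r) with (- (2 / r)) by (field; lra). lra.
Qed.

Lemma Phi_improper xi ka ph d L : tends (fun B => RI (Phi xi ka ph d) (-B) B) L ->
  forall eps, 0 < eps -> exists M, forall a b, a <= - M -> M <= b ->
    Rabs (RI (Phi xi ka ph d) a b - L) < eps.
Proof.
  intros HL eps He. destruct (HL (eps/2) ltac:(lra)) as [M1 HM1].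
  pose proof (Rabs_pos d).
  set (M := Rmax (Rmax M1 (2 * Rabs d + 1)) (8 / eps)).
  assert (HM1' : M1 <= M) by (unfold M; eapply Rle_trans; [apply Rmax_l|apply Rmax_l]).
  assert (HM2 : 2 * Rabs d + 1 <= M) by (unfold M; eapply Rle_trans; [apply Rmax_r|apply Rmax_l]).
  assert (HM3 : 8 / eps <= M) by (unfold M; apply Rmax_r).
  exists M. intros a b Ha Hb.
  assert (ex : forall x y, ex_RInt (Phi xi ka ph d) x y) by (intros; apply exc, Phi_cont).
  assert (Hr : forall r, M <= r -> 2 / r <= eps / 4).
  { intros r Hr. assert (0 < 8 / eps) by (apply Rdiv_lt_0_compat; lra).
    apply (Rmult_le_reg_r r). lra. unfold Rdiv. rewrite Rmult_assoc, Rinv_l, Rmult_1_r by lra.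
    apply (Rmult_le_compat_r eps) in HM3; [|lra]. unfold Rdiv in HM3.
    rewrite Rmult_assoc, Rinv_l, Rmult_1_r in HM3 by lra. nra. }
  destruct (Rle_dec b (-a)) as [Hba|Hba].
  - rewrite <- (RI_chasles _ a (-b) b) by auto.
    assert (T := Phi_tail_l xi ka ph d b a ltac:(lra) ltac:(lra)).
    specialize (HM1 b ltac:(lra)). specialize (Hr b Hb).
    replace (RI (Phi xi ka ph d) a (- b) + RI (Phi xi ka ph d) (- b) b - L) with
      (RI (Phi xi ka ph d) a (- b) + (RI (Phi xi ka ph d) (- b) b - L)) by ring.
    eapply Rle_lt_trans. apply Rabs_triang. lra.
  - rewrite <- (RI_chasles _ a (- a) b) by auto.
    assert (T := Phi_tail_r xi ka ph d (-a) b ltac:(lra) ltac:(lra)).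
    specialize (HM1 (-a) ltac:(lra)). specialize (Hr (-a) ltac:(lra)).
    rewrite Ropp_involutive in HM1.
    replace (RI (Phi xi ka ph d) a (- a) + RI (Phi xi ka ph d) (- a) b - L) with
      ((RI (Phi xi ka ph d) a (- a) - L) + RI (Phi xi ka ph d) (- a) b) by ring.
    eapply Rle_lt_trans. apply Rabs_triang. lra.
Qed.


Definition Iprop (f : R -> R) (L : R) : Prop :=
  forall eps, 0 < eps -> exists M, forall a b, a <= - M -> M <= b -> Rabs (RI f a b - L) < eps.

Lemma to_improper f L : (forall x, continuous f x) -> Iprop f L -> improper_integral f L.
Proof.
  intros Hc H. split.
  - intros a b. constructor. apply ex_RInt_Reals_0, exc; auto.
  - intros eps He. destruct (H eps He) as [M HM]. exists M. intros a b Ha Hb pr.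
    rewrite <- RInt_Reals. apply HM; auto.
Qed.

Lemma Iprop_scale F G K L : (forall x, continuous F x) -> (forall q, G q = K * F q) ->
  Iprop F L -> Iprop G (K * L).
Proof.
  intros Hc HG H eps He.
  destruct (H (eps / (Rabs K + 1))) as [M HM].
  { apply Rdiv_lt_0_compat; [lra|]. pose proof (Rabs_pos K); lra. }
  exists M. intros a b Ha Hb. specialize (HM a b Ha Hb).
  rewrite (RI_ext _ _ _ _ HG), RI_scal by (apply exc; auto).
  replace (K * RI F a b - K * L) with (K * (RI F a b - L)) by ring. rewrite Rabs_mult.
  assert (0 <= Rabs K) by apply Rabs_pos.
  apply Rle_lt_trans with ((Rabs K + 1) * Rabs (RI F a b - L)).
  { assert (0 <= Rabs (RI F a b - L)) by apply Rabs_pos. nra. }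
  apply (Rmult_lt_compat_l (Rabs K + 1)) in HM; [|lra].
  replace ((Rabs K + 1) * (eps / (Rabs K + 1))) with eps in HM by (field; lra). lra.
Qed.

Definition Fgen (xi ka c1 c2 th q : R) : R := cos (xi * q + th) * Ksinc ka (q - c1) * Ksinc ka (q - c2).

Definition Lgen (xi ka c1 c2 th : R) : R :=
  PI / 4 * (1 + sg (2 * ka - xi)) / (c1 - c2) *
  (sin (ka * (c1 - c2) - xi * c1 - th) - sin (- (ka * (c1 - c2)) - xi * c2 - th)).

Lemma Fgen_eq xi ka c1 c2 th q : Fgen xi ka c1 c2 th q = Phi xi ka (xi * c1 + th) (c1 - c2) (q + - c1).
Proof.
  unfold Fgen, Phi. replace (xi * (q + - c1) + (xi * c1 + th)) with (xi * q + th) by ring.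
  replace (q + - c1 + (c1 - c2)) with (q - c2) by ring. reflexivity.
Qed.

Lemma Fgen_cont xi ka c1 c2 th x : continuous (Fgen xi ka c1 c2 th) x.
Proof.
  apply (continuous_ext (fun q => Phi xi ka (xi * c1 + th) (c1 - c2) (q + - c1))).
  intros; symmetry; apply Fgen_eq.
  apply (continuous_comp (fun u => u + - c1) (Phi _ _ _ _) x).
  apply (ex_derive_continuous (K:=R_AbsRing) (V:=R_NormedModule) (fun u => u + - c1)); auto_derive; auto.
  apply Phi_cont.
Qed.

Lemma Fgen_Iprop xi ka c1 c2 th : 0 < xi -> 0 < ka -> c1 <> c2 ->
  Iprop (Fgen xi ka c1 c2 th) (Lgen xi ka c1 c2 th).
Proof.
  intros Hxi Hka Hc.
  assert (Hd : c1 - c2 <> 0) by lra.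
  assert (HL := Phi_lim xi ka (xi * c1 + th) (c1 - c2) Hxi Hka Hd).
  assert (HI := Phi_improper _ _ _ _ _ HL).
  assert (EL : / (c1 - c2) *
     (PI / 4 * (1 + sg (2 * ka - xi)) * sin (ka * (c1 - c2) - (xi * c1 + th)) -
      PI / 4 * (1 + sg (2 * ka - xi)) * sin (ka * - (c1 - c2) - (xi * c1 + th - xi * (c1 - c2))))
     = Lgen xi ka c1 c2 th).
  { unfold Lgen.
    replace (ka * (c1 - c2) - (xi * c1 + th)) with (ka * (c1 - c2) - xi * c1 - th) by ring.
    replace (ka * - (c1 - c2) - (xi * c1 + th - xi * (c1 - c2))) with (- (ka * (c1 - c2)) - xi * c2 - th) by ring.
    field. auto. }
  rewrite EL in HI.
  intros eps He. destruct (HI eps He) as [M HM].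
  exists (M + Rabs c1). intros a b Ha Hb.
  assert (E : RI (Fgen xi ka c1 c2 th) a b = RI (Phi xi ka (xi * c1 + th) (c1 - c2)) (a + - c1) (b + - c1)).
  { rewrite (RI_ext _ _ _ _ (Fgen_eq xi ka c1 c2 th)). apply RI_shift. apply Phi_cont. }
  rewrite E. pose proof (Rle_abs c1). pose proof (Rle_abs (-c1)). rewrite Rabs_Ropp in *.
  apply HM; lra.
Qed.


Lemma phaseA_eq alpha g0 lam kappa0 omega n dtau b b' : 0 < alpha -> 0 < g0 -> 0 < dtau ->
  phaseA alpha g0 lam kappa0 omega n dtau b b' =
  kappa0 * (ctr alpha g0 lam dtau b - ctr alpha g0 lam dtau b') + alpha * g0 * dtau * omega * n * ctr alpha g0 lam dtau b'.
Proof. intros. unfold phaseA, ctr. field. repeat split; lra. Qed.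

Lemma phaseB_eq alpha g0 lam kappa0 omega n dtau b b' : 0 < alpha -> 0 < g0 -> 0 < dtau ->
  phaseB alpha g0 lam kappa0 omega n dtau b b' =
  kappa0 * (ctr alpha g0 lam dtau b - ctr alpha g0 lam dtau b') - alpha * g0 * dtau * omega * n * ctr alpha g0 lam dtau b.
Proof. intros. unfold phaseB, ctr. field. repeat split; lra. Qed.

Lemma V_zero alpha g0 lam kappa0 omega n dtau b b' : 0 < alpha -> 0 < g0 -> 0 < dtau ->
  2 * kappa0 - omega * alpha * g0 * n * dtau = 0 ->
  V_re alpha g0 lam kappa0 omega n dtau b b' = 0 /\ V_im alpha g0 lam kappa0 omega n dtau b b' = 0.
Proof.
  intros Ha Hg Hd H2. unfold V_re, V_im.
  rewrite phaseA_eq, phaseB_eq by auto.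
  set (c1 := ctr alpha g0 lam dtau b). set (c2 := ctr alpha g0 lam dtau b').
  replace (alpha * g0 * dtau * omega * n) with (2 * kappa0) by lra.
  replace (kappa0 * (c1 - c2) - 2 * kappa0 * c1) with (- (kappa0 * (c1 - c2) + 2 * kappa0 * c2)) by ring.
  rewrite sin_neg, cos_neg. split; unfold Rdiv; ring.
Qed.

Lemma Heav_pos x : 0 < x -> Heaviside x = 1.
Proof. intros. unfold Heaviside. destruct (Rle_dec 0 x); [reflexivity|lra]. Qed.
Lemma Heav_neg x : x < 0 -> Heaviside x = 0.
Proof. intros. unfold Heaviside. destruct (Rle_dec 0 x); [lra|reflexivity]. Qed.
Lemma Heav_0 : Heaviside 0 = 1.
Proof. unfold Heaviside. destruct (Rle_dec 0 0); [reflexivity|lra]. Qed.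

Lemma sin_mPI2 x : sin (x - PI/2) = - cos x.
Proof. rewrite sin_minus, sin_PI2, cos_PI2. ring. Qed.
Lemma cos_pPI2 x : cos (x + PI/2) = - sin x.
Proof. rewrite cos_plus, sin_PI2, cos_PI2. ring. Qed.

Lemma part1 alpha g0 lam kappa0 omega n dtau b b' :
  0 < alpha -> 0 < g0 -> 0 < lam -> 0 < kappa0 -> 0 < omega -> 0 < n -> 0 < dtau -> b <> b' ->
  improper_integral (integrand_re alpha g0 lam kappa0 omega n dtau b b')
       (rhs_re alpha g0 lam kappa0 omega n dtau b b') /\
  improper_integral (integrand_im alpha g0 lam kappa0 omega n dtau b b')
       (rhs_im alpha g0 lam kappa0 omega n dtau b b').
Proof.
  intros Ha Hg Hl Hk Ho Hn Hdt Hbb.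
  assert (HT : 0 < alpha * g0 * dtau) by (apply Rmult_lt_0_compat; [apply Rmult_lt_0_compat|]; lra).
  set (xi := alpha * g0 * dtau * omega * n).
  assert (Hxi : 0 < xi) by (unfold xi; apply Rmult_lt_0_compat; [apply Rmult_lt_0_compat|]; lra).
  set (c1 := ctr alpha g0 lam dtau b). set (c2 := ctr alpha g0 lam dtau b').
  assert (Hc : c1 <> c2).
  { unfold c1, c2, ctr. intros E. apply Hbb.
    apply (Rmult_eq_reg_l (2 * lam / (alpha * g0 * dtau))). unfold Rdiv in *.
    transitivity (2 * lam * b * / (alpha * g0 * dtau)). ring. rewrite E. ring.
    apply Rgt_not_eq. apply Rdiv_lt_0_compat; lra. }
  set (K := / (kappa0 * PI)).
  assert (HH : 2 * kappa0 - omega * alpha * g0 * n * dtau = 2 * kappa0 - xi) by (unfold xi; ring).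
  assert (Hd : c1 - c2 = 2 * lam * (b - b') / (alpha * g0 * dtau)) by (unfold c1, c2, ctr; field; lra).
  assert (PA := phaseA_eq alpha g0 lam kappa0 omega n dtau b b' ltac:(lra) ltac:(lra) ltac:(lra)).
  assert (PB := phaseB_eq alpha g0 lam kappa0 omega n dtau b b' ltac:(lra) ltac:(lra) ltac:(lra)).
  fold xi c1 c2 in PA, PB.
  assert (VZ := V_zero alpha g0 lam kappa0 omega n dtau b b' ltac:(lra) ltac:(lra) ltac:(lra)).
  assert (Hbb' : b - b' <> 0) by lra.
  pose proof PI_RGT_0.
  assert (HS : forall X, (2 * kappa0 - xi = 0 -> X = 0) ->
     / (kappa0 * PI) * (PI / 4 * (1 + sg (2 * kappa0 - xi)) / (c1 - c2) * X) =
     alpha * g0 * dtau / (4 * lam * kappa0) * (X / (b - b')) * Heaviside (2 * kappa0 - xi)).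
  { intros X HX. rewrite Hd.
    destruct (Rlt_dec 0 (2 * kappa0 - xi)) as [P|P].
    - rewrite sg_pos, Heav_pos by auto. field. repeat split; lra.
    - destruct (Rlt_dec (2 * kappa0 - xi) 0) as [N|N].
      + rewrite sg_neg, Heav_neg by auto. field. repeat split; lra.
      + assert (E : 2 * kappa0 - xi = 0) by lra. rewrite (HX E). field. repeat split; lra. }
  split.
  - apply to_improper.
    + intros x. apply (continuous_ext (fun q => K * Fgen xi kappa0 c1 c2 0 q)).
      intros q. match goal with |- @eq _ ?a ?b => change (@eq R a b) end.
      unfold integrand_re, Fgen, K. rewrite Rplus_0_r. fold xi c1 c2. ring.
      apply cont_mul. apply continuous_const. apply Fgen_cont.
    + replace (rhs_re alpha g0 lam kappa0 omega n dtau b b') with (K * Lgen xi kappa0 c1 c2 0).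
      * apply (Iprop_scale (Fgen xi kappa0 c1 c2 0)). apply Fgen_cont.
        intros q. unfold integrand_re, Fgen, K. rewrite Rplus_0_r. fold xi c1 c2. ring.
        apply Fgen_Iprop; auto.
      * unfold rhs_re, V_im, Lgen, K. rewrite HH, PA, PB, !Rminus_0_r.
        rewrite HS.
        { replace (- (kappa0 * (c1 - c2)) - xi * c2) with (- (kappa0 * (c1 - c2) + xi * c2)) by ring.
          rewrite sin_neg. field. split; lra. }
        intros E. destruct (VZ ltac:(lra)) as [_ V2]. unfold V_im in V2.
        rewrite PA, PB in V2.
        replace (- (kappa0 * (c1 - c2)) - xi * c2) with (- (kappa0 * (c1 - c2) + xi * c2)) by ring.
        rewrite sin_neg. unfold Rdiv in V2. apply Rmult_integral in V2. destruct V2 as [V2|V2].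
        lra. exfalso. revert V2. apply Rinv_neq_0_compat. auto.
  - apply to_improper.
    + intros x. apply (continuous_ext (fun q => K * Fgen xi kappa0 c1 c2 (PI/2) q)).
      intros q. match goal with |- @eq _ ?a ?b => change (@eq R a b) end.
      unfold integrand_im, Fgen, K. rewrite cos_pPI2. fold xi c1 c2. ring.
      apply cont_mul. apply continuous_const. apply Fgen_cont.
    + replace (rhs_im alpha g0 lam kappa0 omega n dtau b b') with (K * Lgen xi kappa0 c1 c2 (PI/2)).
      * apply (Iprop_scale (Fgen xi kappa0 c1 c2 (PI/2))). apply Fgen_cont.
        intros q. unfold integrand_im, Fgen, K. rewrite cos_pPI2. fold xi c1 c2. ring.
        apply Fgen_Iprop; auto.
      * unfold rhs_im, V_re, Lgen, K. rewrite HH, PA, PB, !sin_mPI2.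
        rewrite HS.
        { replace (- (kappa0 * (c1 - c2)) - xi * c2) with (- (kappa0 * (c1 - c2) + xi * c2)) by ring.
          rewrite cos_neg. field. split; lra. }
        intros E. destruct (VZ ltac:(lra)) as [V1 _]. unfold V_re in V1.
        rewrite PA, PB in V1.
        replace (- (kappa0 * (c1 - c2)) - xi * c2) with (- (kappa0 * (c1 - c2) + xi * c2)) by ring.
        rewrite cos_neg. unfold Rdiv in V1. apply Rmult_integral in V1. destruct V1 as [V1|V1].
        lra. exfalso. revert V1. apply Rinv_neq_0_compat. auto.
Qed.


Theorem mainTheorem6 (alpha g0 lam kappa0 omega : R) (k l : nat) :
  0 < alpha -> 0 < g0 -> 0 < lam -> 0 < kappa0 -> 0 < omega -> (l < k)%nat ->
  let n := INR (k - l) in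
  (* the formula for I_kl *)
  (forall dtau b b' : R, 0 < dtau -> b <> b' ->
     improper_integral (integrand_re alpha g0 lam kappa0 omega n dtau b b')
       (rhs_re alpha g0 lam kappa0 omega n dtau b b') /\
     improper_integral (integrand_im alpha g0 lam kappa0 omega n dtau b b')
       (rhs_im alpha g0 lam kappa0 omega n dtau b b')) /\
  (* V_kl vanishes at dtau = 2 kappa0 / (alpha g0 omega n) *)
  (forall b b' : R, b <> b' ->
     let dtau := 2 * kappa0 / (alpha * g0 * omega * n) in
     V_re alpha g0 lam kappa0 omega n dtau b b' = 0 /\
     V_im alpha g0 lam kappa0 omega n dtau b b' = 0) /\
  (* consequently I_kl = 0 for dtau >= 2 kappa0 / (alpha g0 omega) *)
  (forall dtau b b' : R, 0 < dtau -> b <> b' ->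
     2 * kappa0 / (alpha * g0 * omega) <= dtau ->
     improper_integral (integrand_re alpha g0 lam kappa0 omega n dtau b b') 0 /\
     improper_integral (integrand_im alpha g0 lam kappa0 omega n dtau b b') 0).
Proof.
  intros Ha Hg Hl Hk Ho Hkl n.
  assert (Hn1 : 1 <= n).
  { unfold n. replace 1 with (INR 1) by reflexivity. apply le_INR. lia. }
  split; [|split].
  - intros dtau b b' Hdt Hbb. apply part1; auto; lra.
  - intros b b' Hbb dtau.
    assert (Hdt : 0 < dtau).
    { unfold dtau. apply Rdiv_lt_0_compat. lra.
      repeat apply Rmult_lt_0_compat; lra. }
    apply V_zero; auto. unfold dtau. field. repeat split; lra.
  - intros dtau b b' Hdt Hbb Hge.
    destruct (part1 alpha g0 lam kappa0 omega n dtau b b') as [P1 P2]; auto; try lra.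
    assert (Hxi : 2 * kappa0 <= omega * alpha * g0 * n * dtau).
    { assert (0 < alpha * g0 * omega) by (repeat apply Rmult_lt_0_compat; lra).
      apply (Rmult_le_compat_r (alpha * g0 * omega)) in Hge; [|lra].
      unfold Rdiv in Hge. rewrite Rmult_assoc, Rinv_l, Rmult_1_r in Hge by lra.
      assert (0 <= alpha * g0 * omega * dtau) by nra.
      replace (omega * alpha * g0 * n * dtau) with (n * (alpha * g0 * omega * dtau)) by ring.
      nra. }
    assert (Z : rhs_re alpha g0 lam kappa0 omega n dtau b b' = 0 /\
                rhs_im alpha g0 lam kappa0 omega n dtau b b' = 0).
    { unfold rhs_re, rhs_im.
      destruct (Rle_lt_dec (omega * alpha * g0 * n * dtau) (2 * kappa0)) as [E|E].
      - destruct (V_zero alpha g0 lam kappa0 omega n dtau b b') as [V1 V2]; auto; try lra.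
        rewrite V1, V2. split; ring.
      - rewrite Heav_neg by lra. split; ring. }
    destruct Z as [Z1 Z2]. rewrite Z1 in P1. rewrite Z2 in P2. auto.
Qed.
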